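(* Let $f$ satisfy the standing assumptions below, and for $\xi,u_3\in(0,1)$ define $$G_0(\xi,u_3)=\frac{1}{4\sqrt2}\int_{-1}^{1}f'\!\left(\frac{1-\mu}{2}u_3+\frac{1+\mu}{2}\xi\right)\sqrt{1-\mu}\,d\mu,\qquad V_0(\xi,u_3)=\frac{4}{15}\xi+\frac25u_3 .$$ Then, for $u_3$ sufficiently close to $0$, the minimization problem $\min_{0<\xi<1}\left[-G_0(\xi,u_3)/V_0(\xi,u_3)\right]$ has one and only one critical point in $(0,1)$, and hence one and only one minimizing point. Furthermore, this critical point tends to $1$ as $u_3\to0$.
   Context: Standing assumptions: $f:(0,1)\to\mathbb{R}$ is the inverse of a smooth strictly decreasing function $u_0:\mathbb{R}\to(0,1)$ with $u_0(-\infty)=1$, $u_0(+\infty)=0$; thus $f$ is smooth with $f'<0$, $\lim_{u\to0}f(u)=+\infty$, $\lim_{u\to1}f(u)=-\infty$; moreover $f'''(u)<0$ for $u$ in a neighborhood of $0$ and in a neighborhood of $1$. *)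

(* Defs.v *)
From Stdlib Require Import Reals.
From Coquelicot Require Import Coquelicot.
Open Scope R_scope.

Definition G0 (f : R -> R) (xi u3 : R) : R :=
  / (4 * sqrt 2) *
  RInt (fun mu => Derive f ((1 - mu) / 2 * u3 + (1 + mu) / 2 * xi) * sqrt (1 - mu))
       (-1) 1.

Definition V0 (xi u3 : R) : R := 4 / 15 * xi + 2 / 5 * u3.

Definition J0 (f : R -> R) (xi u3 : R) : R := - G0 f xi u3 / V0 xi u3.

(* Main.v *)
Require Import Defs.
From Stdlib Require Import Reals.
From Coquelicot Require Import Coquelicot.
From Stdlib Require Import Lra Psatz Classical ClassicalEpsilon.
From Stdlib Require Import Ranalysis5.
Open Scope R_scope.

Definition arg (a x mu : R) := (1 - mu) / 2 * a + (1 + mu) / 2 * x.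

Lemma arg_in a x mu : 0 < a < 1 -> 0 < x < 1 -> -1 <= mu <= 1 -> 0 < arg a x mu < 1.
Proof.
  intros Ha Hx Hm. unfold arg.
  assert (E1 : (1 - mu) / 2 * a + (1 + mu) / 2 * x = a + (1 + mu) / 2 * (x - a)) by field.
  assert (E2 : (1 - mu) / 2 * a + (1 + mu) / 2 * x = x + (1 - mu) / 2 * (a - x)) by field.
  destruct (Rle_dec a x).
  - split.
    + rewrite E1. assert (0 <= (1 + mu) / 2 * (x - a)) by (apply Rmult_le_pos; lra). lra.
    + rewrite E2. assert (0 <= (1 - mu) / 2 * (x - a)) by (apply Rmult_le_pos; lra). lra.
  - split.
    + rewrite E2. assert (0 <= (1 - mu) / 2 * (a - x)) by (apply Rmult_le_pos; lra). lra.
    + rewrite E1. assert (0 <= (1 + mu) / 2 * (a - x)) by (apply Rmult_le_pos; lra). lra.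
Qed.

Lemma cder (g : R -> R) x : ex_derive g x -> continuous g x.
Proof. apply (ex_derive_continuous (K:=R_AbsRing) (V:=R_NormedModule) g). Qed.

Lemma exc (h : R -> R) p q : (forall z, Rmin p q <= z <= Rmax p q -> continuous h z) -> ex_RInt h p q.
Proof. apply (ex_RInt_continuous (V:=R_CompleteNormedModule)). Qed.

Lemma mvt (g dg : R -> R) p q : p < q -> (forall x, p <= x <= q -> is_derive g x (dg x)) ->
  exists c, p <= c <= q /\ g q - g p = dg c * (q - p).
Proof.
  intros Hpq Hd.
  destruct (MVT_gen g p q dg) as [c [Hc Hc']].
  - intros x Hx. rewrite Rmin_left in Hx by lra. rewrite Rmax_right in Hx by lra.
    apply Hd; lra.
  - intros x Hx. rewrite Rmin_left in Hx by lra. rewrite Rmax_right in Hx by lra.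
    apply continuity_pt_filterlim. apply (ex_derive_continuous (K:=R_AbsRing) (V:=R_NormedModule) g).
    eexists; apply Hd; lra.
  - exists c. rewrite Rmin_left in Hc by lra. rewrite Rmax_right in Hc by lra. auto.
Qed.

Lemma decr_strict (g dg : R -> R) p q : p < q -> (forall x, p <= x <= q -> is_derive g x (dg x)) ->
  (forall x, p <= x <= q -> dg x < 0) -> g q < g p.
Proof.
  intros H1 H2 H3. destruct (mvt g dg p q H1 H2) as [c [Hc E]].
  specialize (H3 c Hc). nra.
Qed.

Lemma incr_strict (g dg : R -> R) p q : p < q -> (forall x, p <= x <= q -> is_derive g x (dg x)) ->
  (forall x, p <= x <= q -> 0 < dg x) -> g p < g q.
Proof.
  intros H1 H2 H3. destruct (mvt g dg p q H1 H2) as [c [Hc E]].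
  specialize (H3 c Hc). nra.
Qed.

Lemma decr_le (g dg : R -> R) p q : p <= q -> (forall x, p <= x <= q -> is_derive g x (dg x)) ->
  (forall x, p <= x <= q -> dg x <= 0) -> g q <= g p.
Proof.
  intros H1 H2 H3. destruct (Req_dec p q) as [->|Hne]; [lra|].
  destruct (mvt g dg p q ltac:(lra) H2) as [c [Hc E]].
  specialize (H3 c Hc). nra.
Qed.

Lemma incr_le (g dg : R -> R) p q : p <= q -> (forall x, p <= x <= q -> is_derive g x (dg x)) ->
  (forall x, p <= x <= q -> 0 <= dg x) -> g p <= g q.
Proof.
  intros H1 H2 H3. destruct (Req_dec p q) as [->|Hne]; [lra|].
  destruct (mvt g dg p q ltac:(lra) H2) as [c [Hc E]].
  specialize (H3 c Hc). nra.
Qed.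

Lemma c2d_fun2 (r : R -> R) x t : continuous r t -> continuity_2d_pt (fun _ v => r v) x t.
Proof.
  intros H. apply (continuity_1d_2d_pt_comp r (fun _ v => v)).
  - apply continuity_pt_filterlim. exact H.
  - apply continuity_2d_pt_id2.
Qed.

Lemma c2d_arg a x t : continuity_2d_pt (fun u v => arg a u v) x t.
Proof.
  unfold arg.
  apply continuity_2d_pt_plus.
  - apply continuity_2d_pt_mult; [|apply continuity_2d_pt_const].
    apply (continuity_2d_pt_ext (fun u v => (1 - v) * / 2)).
    { intros; reflexivity. }
    apply continuity_2d_pt_mult; [|apply continuity_2d_pt_const].
    apply continuity_2d_pt_minus; [apply continuity_2d_pt_const|apply continuity_2d_pt_id2].
  - apply continuity_2d_pt_mult; [|apply continuity_2d_pt_id1].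
    apply (continuity_2d_pt_ext (fun u v => (1 + v) * / 2)).
    { intros; reflexivity. }
    apply continuity_2d_pt_mult; [|apply continuity_2d_pt_const].
    apply continuity_2d_pt_plus; [apply continuity_2d_pt_const|apply continuity_2d_pt_id2].
Qed.

Lemma is_derive_arg a u v : is_derive (fun z => arg a z v) u ((1 + v) / 2).
Proof. unfold arg. auto_derive; auto. ring. Qed.

Lemma cont_arg_mu a x mu : continuous (fun m => arg a x m) mu.
Proof. apply cder. unfold arg. auto_derive. auto. Qed.

Lemma param_deriv (g g' rho : R -> R) (a x : R) :
  0 < a < 1 -> 0 < x < 1 ->
  (forall t, 0 < t < 1 -> is_derive g t (g' t)) ->
  (forall t, 0 < t < 1 -> continuous g' t) ->
  (forall m, -1 <= m <= 1 -> continuous rho m) ->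
  is_derive (fun y => RInt (fun m => g (arg a y m) * rho m) (-1) 1) x
    (RInt (fun m => g' (arg a x m) * ((1 + m) / 2 * rho m)) (-1) 1).
Proof.
  intros Ha Hx Hg Hg' Hr.
  assert (Hmm : Rmin (-1) 1 = -1 /\ Rmax (-1) 1 = 1).
  { split; [apply Rmin_left|apply Rmax_right]; lra. }
  destruct Hmm as [Hmin Hmax].
  assert (Hloc : locally x (fun y => 0 < y < 1)).
  { assert (0 < Rmin x (1 - x)) as Hp by (apply Rmin_glb_lt; lra).
    exists (mkposreal _ Hp). intros y Hy. simpl in Hy. unfold ball in Hy; simpl in Hy.
    unfold AbsRing_ball, abs, minus, plus, opp in Hy; simpl in Hy.
    pose proof (Rmin_l x (1-x)); pose proof (Rmin_r x (1-x)).
    apply Rabs_lt_between in Hy. lra. }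
  assert (Hder : forall y m, 0 < y < 1 -> -1 <= m <= 1 ->
     is_derive (fun z => g (arg a z m) * rho m) y (g' (arg a y m) * ((1 + m) / 2 * rho m))).
  { intros y m Hy Hm.
    apply (is_derive_ext (fun z => rho m * g (arg a z m))).
    { intros; simpl; ring. }
    replace (g' (arg a y m) * ((1 + m) / 2 * rho m)) with (scal (rho m) (scal ((1 + m) / 2) (g' (arg a y m)))).
    2:{ unfold scal; simpl; unfold mult; simpl; ring. }
    apply is_derive_scal. apply (is_derive_comp (K:=R_AbsRing) (V:=R_NormedModule) g (fun z => arg a z m)).
    - apply Hg. apply arg_in; auto.
    - apply is_derive_arg. }
  assert (Hcont : forall y m, 0 < y < 1 -> -1 <= m <= 1 ->
     continuous (fun m => g (arg a y m) * rho m) m).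
  { intros y m Hy Hm.
    apply (continuous_mult (fun m => g (arg a y m)) rho); [|apply Hr; auto].
    apply continuous_comp; [apply cont_arg_mu|].
    apply cder. eexists. apply Hg. apply arg_in; auto. }
  assert (Hcont' : forall m, -1 <= m <= 1 ->
     continuous (fun m => g' (arg a x m) * ((1 + m) / 2 * rho m)) m).
  { intros m Hm.
    apply (continuous_mult (fun m => g' (arg a x m))).
    - apply continuous_comp; [apply cont_arg_mu|]. apply Hg'. apply arg_in; auto.
    - apply (continuous_mult (fun m => (1 + m) / 2)); [|apply Hr; auto].
      apply cder. auto_derive. auto. }
  assert (E : RInt (fun m => g' (arg a x m) * ((1 + m) / 2 * rho m)) (-1) 1 =
              RInt (fun t => Derive (fun u => g (arg a u t) * rho t) x) (-1) 1).
  { apply RInt_ext. intros m Hm. rewrite Hmin, Hmax in Hm.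
    symmetry. apply is_derive_unique. apply Hder; auto; lra. }
  rewrite E.
  apply is_derive_RInt_param_aux.
  - eapply filter_imp; [|exact Hloc]. intros y Hy t Ht. rewrite Hmin, Hmax in Ht.
    eexists. apply Hder; auto.
  - intros t Ht. rewrite Hmin, Hmax in Ht.
    pose proof (arg_in a x t Ha Hx Ht) as Hat.
    assert (Hp : 0 < Rmin (arg a x t) (1 - arg a x t)) by (apply Rmin_glb_lt; lra).
    pose proof (c2d_arg a x t (mkposreal _ Hp)) as Hl. simpl in Hl.
    apply (continuity_2d_pt_ext_loc (fun u v => g' (arg a u v) * ((1 + v) / 2 * rho v))).
    + eapply locally_2d_impl; [|exact Hl]. apply locally_2d_forall.
      intros u v Huv. symmetry. apply is_derive_unique.
      apply (is_derive_ext (fun z => rho v * g (arg a z v))).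
      { intros; simpl; ring. }
      replace (g' (arg a u v) * ((1 + v) / 2 * rho v)) with (scal (rho v) (scal ((1 + v) / 2) (g' (arg a u v)))).
      2:{ unfold scal; simpl; unfold mult; simpl; ring. }
      apply is_derive_scal. apply (is_derive_comp (K:=R_AbsRing) (V:=R_NormedModule) g (fun z => arg a z v)).
      * apply Hg. pose proof (Rmin_l (arg a x t) (1 - arg a x t)).
        pose proof (Rmin_r (arg a x t) (1 - arg a x t)).
        apply Rabs_lt_between in Huv. lra.
      * apply is_derive_arg.
    + apply continuity_2d_pt_mult.
      * apply (continuity_1d_2d_pt_comp g' (fun u v => arg a u v)).
        -- apply continuity_pt_filterlim. apply Hg'. auto.
        -- apply c2d_arg.
      * apply (c2d_fun2 (fun v => (1 + v) / 2 * rho v)).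
        apply (continuous_mult (fun m => (1 + m) / 2)); [|apply Hr; auto].
        apply cder. auto_derive. auto.
  - eapply filter_imp; [|exact Hloc]. intros y Hy.
    apply exc. intros z Hz. rewrite Hmin, Hmax in Hz. apply Hcont; auto.
  - apply (ex_RInt_ext (fun m => g' (arg a x m) * ((1 + m) / 2 * rho m))).
    { intros m Hm. rewrite Hmin, Hmax in Hm. symmetry. apply is_derive_unique. apply Hder; auto; lra. }
    apply exc. intros z Hz. rewrite Hmin, Hmax in Hz. apply Hcont'; auto.
Qed.

Lemma rint_const c p q : RInt (fun _ => c) p q = (q - p) * c.
Proof. rewrite RInt_const. reflexivity. Qed.

Lemma rint_chasles (h : R -> R) p q r : ex_RInt h p q -> ex_RInt h q r ->
  RInt h p q + RInt h q r = RInt h p r.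
Proof. intros. rewrite <- (RInt_Chasles h p q r); auto. Qed.

Lemma rint_scal (h : R -> R) k p q : ex_RInt h p q ->
  RInt (fun x => k * h x) p q = k * RInt h p q.
Proof. intros. apply (RInt_scal (V:=R_CompleteNormedModule) h p q k). auto. Qed.

Lemma ftc (F dF : R -> R) p q : p <= q ->
  (forall x, p <= x <= q -> is_derive F x (dF x)) ->
  (forall x, p <= x <= q -> continuous dF x) -> RInt dF p q = F q - F p.
Proof.
  intros Hpq H1 H2. apply is_RInt_unique.
  apply (is_RInt_derive (V:=R_CompleteNormedModule) F dF p q).
  - intros x Hx. rewrite Rmin_left, Rmax_right in Hx by lra. apply H1; lra.
  - intros x Hx. rewrite Rmin_left, Rmax_right in Hx by lra. apply H2; lra.
Qed.

Lemma mm1 : Rmin (-1) 1 = -1. Proof. apply Rmin_left; lra. Qed.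
Lemma mM1 : Rmax (-1) 1 = 1. Proof. apply Rmax_right; lra. Qed.

Lemma cont_integrand (g rho : R -> R) a x m :
  0 < a < 1 -> 0 < x < 1 -> -1 <= m <= 1 ->
  (forall t, 0 < t < 1 -> continuous g t) -> continuous rho m ->
  continuous (fun m => g (arg a x m) * rho m) m.
Proof.
  intros Ha Hx Hm Hg Hr.
  apply (continuous_mult (fun m => g (arg a x m)) rho); auto.
  apply continuous_comp; [apply cont_arg_mu|]. apply Hg. apply arg_in; auto.
Qed.

Lemma ex_integrand (g rho : R -> R) a x p q :
  0 < a < 1 -> 0 < x < 1 -> -1 <= p <= q -> q <= 1 ->
  (forall t, 0 < t < 1 -> continuous g t) -> (forall m, -1 <= m <= 1 -> continuous rho m) ->
  ex_RInt (fun m => g (arg a x m) * rho m) p q.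
Proof.
  intros Ha Hx Hp Hq Hg Hr. apply exc. intros z Hz. rewrite Rmin_left, Rmax_right in Hz by lra.
  apply cont_integrand; auto; try lra. apply Hr; lra.
Qed.

Definition rho0 (m : R) := sqrt (1 - m).
Definition rho1 (m : R) := (1 + m) / 2 * sqrt (1 - m).
Definition rho2 (m : R) := (1 + m) / 2 * ((1 + m) / 2 * sqrt (1 - m)).

Lemma cont_rho0 m : continuous rho0 m.
Proof. unfold rho0. apply continuous_sqrt_comp. apply cder. auto_derive. auto. Qed.
Lemma cont_rho1 m : continuous rho1 m.
Proof. unfold rho1. apply (continuous_mult (fun m => (1 + m) / 2)).
  apply cder; auto_derive; auto. apply cont_rho0. Qed.
Lemma cont_rho2 m : continuous rho2 m.
Proof. unfold rho2. apply (continuous_mult (fun m => (1 + m) / 2)).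
  apply cder; auto_derive; auto. apply cont_rho1. Qed.

Lemma sqrt_le2 m : -1 <= m -> sqrt (1 - m) <= 2 \/ 3 < m.
Proof.
  intros. destruct (Rle_dec m 3); [left|right; lra].
  rewrite <- (sqrt_square 2) by lra. apply sqrt_le_1_alt. lra.
Qed.

Lemma rho0_bnd m : -1 <= m <= 1 -> 0 <= rho0 m <= 2.
Proof. intros. unfold rho0. split; [apply sqrt_pos|]. destruct (sqrt_le2 m); lra. Qed.
Lemma rho1_bnd m : -1 <= m <= 1 -> 0 <= rho1 m <= 2.
Proof. intros H. pose proof (rho0_bnd m H). unfold rho1, rho0 in *.
  split; [apply Rmult_le_pos; lra|]. nra. Qed.
Lemma rho2_bnd m : -1 <= m <= 1 -> 0 <= rho2 m <= 2.
Proof. intros H. pose proof (rho1_bnd m H). unfold rho2, rho1, rho0 in *.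
  split; [apply Rmult_le_pos; lra|]. nra. Qed.

Definition D1 (f : R -> R) := Derive f.
Definition D2 (f : R -> R) := Derive (Derive f).
Definition D3 (f : R -> R) := Derive (Derive (Derive f)).

Definition Fprops (f : R -> R) : Prop :=
 (forall t, 0 < t < 1 -> is_derive f t (D1 f t)) /\
 (forall t, 0 < t < 1 -> is_derive (D1 f) t (D2 f t)) /\
 (forall t, 0 < t < 1 -> is_derive (D2 f) t (D3 f t)) /\
 (forall t, 0 < t < 1 -> continuous (D3 f) t) /\
 (forall t, 0 < t < 1 -> D1 f t < 0) /\
 (forall M, exists d, 0 < d < 1 /\ forall a, 0 < a <= d -> M < f a) /\
 (forall M, exists d, 0 < d < 1 /\ forall a, d <= a < 1 -> f a < M) /\
 (exists d, 0 < d <= 1/2 /\ forall u, 0 < u < d -> D3 f u < 0) /\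
 (exists d, 0 < d <= 1/2 /\ forall u, 1 - d < u < 1 -> D3 f u < 0).


Lemma F_d0 f : Fprops f -> forall t, 0 < t < 1 -> is_derive f t (D1 f t).
Proof. intros H; apply H. Qed.
Lemma F_d1 f : Fprops f -> forall t, 0 < t < 1 -> is_derive (D1 f) t (D2 f t).
Proof. intros H; apply H. Qed.
Lemma F_d2 f : Fprops f -> forall t, 0 < t < 1 -> is_derive (D2 f) t (D3 f t).
Proof. intros H; apply H. Qed.
Lemma F_cont3 f : Fprops f -> forall t, 0 < t < 1 -> continuous (D3 f) t.
Proof. intros H; apply H. Qed.
Lemma F_neg f : Fprops f -> forall t, 0 < t < 1 -> D1 f t < 0.
Proof. intros H; apply H. Qed.
Lemma F_lim0 f : Fprops f -> forall M, exists d, 0 < d < 1 /\ forall a, 0 < a <= d -> M < f a.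
Proof. intros H; apply H. Qed.
Lemma F_lim1 f : Fprops f -> forall M, exists d, 0 < d < 1 /\ forall a, d <= a < 1 -> f a < M.
Proof. intros H; apply H. Qed.
Lemma F_30 f : Fprops f -> exists d, 0 < d <= 1/2 /\ forall u, 0 < u < d -> D3 f u < 0.
Proof. intros H; apply H. Qed.
Lemma F_31 f : Fprops f -> exists d, 0 < d <= 1/2 /\ forall u, 1 - d < u < 1 -> D3 f u < 0.
Proof. intros H; apply H. Qed.

Lemma F_cont0 f : Fprops f -> forall t, 0 < t < 1 -> continuous f t.
Proof. intros HF t Ht. apply cder. eexists. apply F_d0; auto. Qed.
Lemma F_cont1 f : Fprops f -> forall t, 0 < t < 1 -> continuous (D1 f) t.
Proof. intros HF t Ht. apply cder. eexists. apply F_d1; auto. Qed.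
Lemma F_cont2 f : Fprops f -> forall t, 0 < t < 1 -> continuous (D2 f) t.
Proof. intros HF t Ht. apply cder. eexists. apply F_d2; auto. Qed.

Lemma F_decr f : Fprops f -> forall s t, 0 < s < t -> t < 1 -> f t < f s.
Proof.
  intros HF s t H1 H2.
  apply (decr_strict f (D1 f)); [lra| |].
  - intros; apply F_d0; auto; lra.
  - intros x Hx. apply F_neg; auto; lra.
Qed.

Lemma F_decr_le f : Fprops f -> forall s t, 0 < s <= t -> t < 1 -> f t <= f s.
Proof.
  intros HF s t H1 H2. destruct (Req_dec s t) as [->|]; [lra|].
  left; apply F_decr; auto; lra.
Qed.

Lemma F_t1 f : Fprops f -> exists t1, 0 < t1 < 1 /\ forall s, t1 <= s < 1 -> D2 f s <= 0.
Proof.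
  intros HF. destruct (F_31 f HF) as [d1 [Hd1 H31]].
  destruct (classic (exists t, 1 - d1 < t < 1 /\ D2 f t <= 0)) as [[t [Ht Ht']]|Hno].
  - exists t. split; [lra|]. intros s Hs.
    destruct (Req_dec s t) as [->|]; [auto|].
    assert (D2 f s < D2 f t); [|lra].
    apply (decr_strict (D2 f) (D3 f)); [lra| |].
    + intros; apply F_d2; auto; lra.
    + intros; apply H31; lra.
  - exfalso.
    assert (Hpos : forall t, 1 - d1 < t < 1 -> 0 < D2 f t).
    { intros t Ht. apply Rnot_le_lt. intro. apply Hno. exists t; auto. }
    remember (1 - d1 / 2) as s0 eqn:Hs0.
    destruct (F_lim1 f HF (f s0 + D1 f s0)) as [d [Hd Hlim]].
    remember (Rmax d ((s0 + 1) / 2)) as t eqn:Hteq.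
    assert (Ht : s0 < t < 1).
    { rewrite Hteq; split. eapply Rlt_le_trans; [|apply Rmax_r]; lra.
      apply Rmax_lub_lt; lra. }
    specialize (Hlim t ltac:(split; [rewrite Hteq; apply Rmax_l|lra])).
    destruct (mvt f (D1 f) s0 t ltac:(lra)) as [c [Hc E]].
    { intros; apply F_d0; auto; lra. }
    assert (D1 f s0 <= D1 f c).
    { apply (incr_le (D1 f) (D2 f)); [lra| |].
      - intros; apply F_d1; auto; lra.
      - intros; left; apply Hpos; lra. }
    assert (D1 f s0 < 0) by (apply F_neg; auto; lra).
    assert (D1 f c * (t - s0) >= D1 f s0) by nra.
    lra.
Qed.


Definition I0 (f : R -> R) (a x : R) : R := RInt (fun m => D1 f (arg a x m) * rho0 m) (-1) 1.
Definition I1 (f : R -> R) (a x : R) : R := RInt (fun m => D2 f (arg a x m) * rho1 m) (-1) 1.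
Definition I2 (f : R -> R) (a x : R) : R := RInt (fun m => D3 f (arg a x m) * rho2 m) (-1) 1.
Definition N (f : R -> R) (a x : R) : R := V0 x a * I1 f a x - 4 / 15 * I0 f a x.

Lemma dI0 f a x : Fprops f -> 0 < a < 1 -> 0 < x < 1 -> is_derive (I0 f a) x (I1 f a x).
Proof.
  intros HF Ha Hx. unfold I0, I1.
  apply (param_deriv (D1 f) (D2 f) rho0 a x Ha Hx).
  - apply F_d1; auto.
  - apply F_cont2; auto.
  - intros; apply cont_rho0.
Qed.

Lemma dI1 f a x : Fprops f -> 0 < a < 1 -> 0 < x < 1 -> is_derive (I1 f a) x (I2 f a x).
Proof.
  intros HF Ha Hx. unfold I1, I2.
  apply (param_deriv (D2 f) (D3 f) rho1 a x Ha Hx).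
  - apply F_d2; auto.
  - apply F_cont3; auto.
  - intros; apply cont_rho1.
Qed.

Lemma dN f a x : Fprops f -> 0 < a < 1 -> 0 < x < 1 -> is_derive (N f a) x (V0 x a * I2 f a x).
Proof.
  intros HF Ha Hx. unfold N.
  assert (H1 : is_derive (fun y => V0 y a * I1 f a y) x (4/15 * I1 f a x + V0 x a * I2 f a x)).
  { apply (is_derive_mult (K:=R_AbsRing) (fun y => V0 y a) (I1 f a) x (4/15) (I2 f a x)).
    - unfold V0. auto_derive; auto; ring.
    - apply dI1; auto.
    - intros; apply Rmult_comm. }
  assert (H2 : is_derive (fun y => 4/15 * I0 f a y) x (4/15 * I1 f a x)).
  { apply is_derive_scal. apply dI0; auto. }
  pose proof (is_derive_minus _ _ x _ _ H1 H2) as H3.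
  eapply is_derive_ext; [|eapply (is_derive_ext_loc _ _ x _ (filter_forall _ (fun _ => eq_refl _)))]; [intros; reflexivity|].
  replace (V0 x a * I2 f a x) with (minus (4 / 15 * I1 f a x + V0 x a * I2 f a x) (4 / 15 * I1 f a x)).
  2:{ unfold minus, plus, opp; simpl; ring. }
  exact H3.
Qed.

Lemma V0_pos x a : 0 < a < 1 -> 0 < x < 1 -> 0 < V0 x a < 1.
Proof. unfold V0; intros; lra. Qed.

Lemma sqrt2_pos : 0 < sqrt 2.
Proof. apply sqrt_lt_R0; lra. Qed.

Lemma dJ f a x : Fprops f -> 0 < a < 1 -> 0 < x < 1 ->
  is_derive (fun xi => J0 f xi a) x (- / (4 * sqrt 2) * N f a x / (V0 x a) ^ 2).
Proof.
  intros HF Ha Hx.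
  apply (is_derive_ext (fun xi => - (/ (4 * sqrt 2) * I0 f a xi) / V0 xi a)).
  { intros t. reflexivity. }
  pose proof (V0_pos x a Ha Hx). pose proof sqrt2_pos.
  replace (- / (4 * sqrt 2) * N f a x / (V0 x a) ^ 2) with
    ((- (/ (4 * sqrt 2) * I1 f a x) * V0 x a - - (/ (4 * sqrt 2) * I0 f a x) * (4/15)) / V0 x a ^ 2).
  2:{ unfold N. field. split; lra. }
  apply (is_derive_div (fun xi => - (/ (4 * sqrt 2) * I0 f a xi)) (fun xi => V0 xi a)).
  - apply (is_derive_opp (fun xi => / (4 * sqrt 2) * I0 f a xi)). apply is_derive_scal. apply dI0; auto.
  - unfold V0. auto_derive; auto; ring.
  - lra.
Qed.

Lemma arg_eq a x m : arg a x m = a + (1 + m) / 2 * (x - a).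
Proof. unfold arg; field. Qed.

Lemma arg_m1 a x : arg a x (-1) = a.
Proof. unfold arg; field. Qed.

Lemma arg_1 a x : arg a x 1 = x.
Proof. unfold arg; field. Qed.

Lemma arg_lo a x m : a <= x -> -1 <= m -> a <= arg a x m.
Proof. intros. rewrite arg_eq. assert (0 <= (1 + m) / 2 * (x - a)) by (apply Rmult_le_pos; lra). lra. Qed.

Lemma arg_hi a x m : a <= x -> m <= 1 -> arg a x m <= x.
Proof. intros. unfold arg.
  assert (E : (1 - m) / 2 * a + (1 + m) / 2 * x = x - (1 - m) / 2 * (x - a)) by field.
  rewrite E. assert (0 <= (1 - m) / 2 * (x - a)) by (apply Rmult_le_pos; lra). lra. Qed.

Lemma arg_mono a x m m' : a <= x -> m <= m' -> arg a x m <= arg a x m'.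
Proof. intros. rewrite !arg_eq. assert (0 <= (m' - m) / 2 * (x - a)) by (apply Rmult_le_pos; lra).
  lra. Qed.

Lemma arg_smono a x m m' : a < x -> m < m' -> arg a x m < arg a x m'.
Proof. intros. rewrite !arg_eq. assert (0 < (m' - m) / 2 * (x - a)) by (apply Rmult_lt_0_compat; lra).
  lra. Qed.

Lemma ex_plain (g : R -> R) a x p q : 0 < a < 1 -> 0 < x < 1 -> -1 <= p <= q -> q <= 1 ->
  (forall t, 0 < t < 1 -> continuous g t) -> ex_RInt (fun m => g (arg a x m)) p q.
Proof.
  intros Ha Hx Hp Hq Hg. apply exc. intros z Hz. rewrite Rmin_left, Rmax_right in Hz by lra.
  apply continuous_comp; [apply cont_arg_mu|]. apply Hg. apply arg_in; auto; lra.
Qed.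

Lemma ftc_arg (g g' : R -> R) a x p q : 0 < a < 1 -> 0 < x < 1 -> x <> a -> -1 <= p <= q -> q <= 1 ->
  (forall t, 0 < t < 1 -> is_derive g t (g' t)) -> (forall t, 0 < t < 1 -> continuous g' t) ->
  RInt (fun m => g' (arg a x m)) p q = 2 / (x - a) * (g (arg a x q) - g (arg a x p)).
Proof.
  intros Ha Hx Hxa Hp Hq Hg Hg'.
  rewrite (ftc (fun m => 2 / (x - a) * g (arg a x m)) (fun m => g' (arg a x m)) p q).
  { rewrite <- Rmult_minus_distr_l. reflexivity. } { lra. }
  - intros m Hm.
    replace (g' (arg a x m)) with (2 / (x - a) * ((x - a) / 2 * g' (arg a x m))) by (field; lra).
    apply is_derive_scal.
    apply (is_derive_comp (K:=R_AbsRing) (V:=R_NormedModule) g (fun m => arg a x m)).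
    + apply Hg. apply arg_in; auto; lra.
    + unfold arg. auto_derive; auto. field.
  - intros m Hm. apply continuous_comp; [apply cont_arg_mu|]. apply Hg'. apply arg_in; auto; lra.
Qed.

Lemma rint_le_const (h : R -> R) c p q : p <= q -> ex_RInt h p q ->
  (forall m, p < m < q -> h m <= c) -> RInt h p q <= (q - p) * c.
Proof.
  intros Hpq He H. rewrite <- rint_const. apply RInt_le; auto.
  apply ex_RInt_const.
Qed.

Lemma rint_ge_const (h : R -> R) c p q : p <= q -> ex_RInt h p q ->
  (forall m, p < m < q -> c <= h m) -> (q - p) * c <= RInt h p q.
Proof.
  intros Hpq He H. rewrite <- rint_const. apply RInt_le; auto.
  apply ex_RInt_const.
Qed.

Lemma sqrt_ge1 m : m <= 0 -> 1 <= sqrt (1 - m).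
Proof. intros. pose proof (sqrt_le_1_alt 1 (1 - m)) as H1. rewrite sqrt_1 in H1. apply H1; lra. Qed.

Lemma posN f x : Fprops f -> 0 < x < 1 ->
  exists a1, 0 < a1 < 1 /\ forall a, 0 < a < a1 -> 0 < N f a x.
Proof.
  intros HF Hx.
  destruct (F_30 f HF) as [d0 [Hd0 H30]].
  remember (Rmin (d0 / 2) x) as m0 eqn:Hm0.
  assert (Hm0b : 0 < m0 <= x /\ m0 < d0).
  { rewrite Hm0. pose proof (Rmin_l (d0/2) x). pose proof (Rmin_r (d0/2) x).
    split; [split|]; try lra. apply Rmin_glb_lt; lra. }
  destruct (continuity_ab_min (D2 f) m0 x) as [mn [Hmn Hmnb]]; [lra| |].
  { intros c Hc. apply continuity_pt_filterlim. apply F_cont2; auto; lra. }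
  remember (Rmax 0 (- Rmin (D2 f m0) (D2 f mn))) as B eqn:HB.
  assert (HB0 : 0 <= B) by (rewrite HB; apply Rmax_l).
  assert (Hlow : forall s, 0 < s <= x -> - B <= D2 f s).
  { intros s Hs.
    assert (- B <= Rmin (D2 f m0) (D2 f mn)).
    { rewrite HB. pose proof (Rmax_r 0 (- Rmin (D2 f m0) (D2 f mn))). lra. }
    destruct (Rle_dec m0 s).
    - pose proof (Hmn s ltac:(lra)). pose proof (Rmin_r (D2 f m0) (D2 f mn)). lra.
    - assert (D2 f m0 <= D2 f s).
      { apply (decr_le (D2 f) (D3 f)); [lra| |].
        + intros; apply F_d2; auto; lra.
        + intros; left; apply H30; lra. }
      pose proof (Rmin_l (D2 f m0) (D2 f mn)). lra. }
  destruct (F_lim0 f HF (f (x / 2) + 8 * B + 1)) as [dM [HdM Hlim]].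
  exists (Rmin dM (x / 2)). split.
  { split; [apply Rmin_glb_lt; lra|]. pose proof (Rmin_r dM (x/2)). lra. }
  intros a Ha.
  pose proof (Rmin_l dM (x/2)). pose proof (Rmin_r dM (x/2)).
  assert (Ha1 : 0 < a < 1) by lra.
  assert (Hfa : f (x / 2) + 8 * B + 1 < f a) by (apply Hlim; lra).
  assert (HI1 : 2 * (- (2 * B)) <= I1 f a x).
  { unfold I1. replace 2 with (1 - -1) at 1 by ring. apply rint_ge_const; [lra| |].
    - apply ex_integrand; auto; try lra. apply F_cont2; auto. intros; apply cont_rho1.
    - intros m Hm. pose proof (rho1_bnd m ltac:(lra)).
      assert (- B <= D2 f (arg a x m)).
      { apply Hlow. split. apply arg_in; auto; lra. apply arg_hi; lra. }
      nra. }
  assert (HI0 : I0 f a x <= 2 * (f (x / 2) - f a)).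
  { unfold I0. rewrite <- (rint_chasles _ (-1) 0 1).
    2,3: apply ex_integrand; auto; try lra; [apply F_cont1; auto| intros; apply cont_rho0].
    assert (Hp2 : RInt (fun m => D1 f (arg a x m) * rho0 m) 0 1 <= 0).
    { replace 0 with ((1 - 0) * 0) at 2 by ring. apply rint_le_const; [lra| |].
      - apply ex_integrand; auto; try lra. apply F_cont1; auto. intros; apply cont_rho0.
      - intros m Hm. pose proof (rho0_bnd m ltac:(lra)).
        assert (D1 f (arg a x m) < 0) by (apply F_neg; auto; apply arg_in; auto; lra).
        nra. }
    assert (Hp1 : RInt (fun m => D1 f (arg a x m) * rho0 m) (-1) 0 <= RInt (fun m => D1 f (arg a x m)) (-1) 0).
    { apply RInt_le; [lra| | |].
      - apply ex_integrand; auto; try lra. apply F_cont1; auto. intros; apply cont_rho0.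
      - apply ex_plain; auto; try lra. apply F_cont1; auto.
      - intros m Hm. unfold rho0. pose proof (sqrt_ge1 m ltac:(lra)).
        assert (D1 f (arg a x m) < 0) by (apply F_neg; auto; apply arg_in; auto; lra).
        nra. }
    rewrite (ftc_arg f (D1 f) a x (-1) 0) in Hp1; auto; try lra.
    2: apply F_d0; auto.
    2: apply F_cont1; auto.
    rewrite arg_m1 in Hp1.
    assert (E0 : arg a x 0 = (a + x) / 2) by (unfold arg; field).
    rewrite E0 in Hp1.
    assert (f ((a + x) / 2) <= f (x / 2)) by (apply F_decr_le; auto; lra).
    assert (f (x / 2) < f a) by (apply F_decr; auto; lra).
    assert (Hk : 2 <= 2 / (x - a)).
    { apply (Rmult_le_reg_r (x - a)); [lra|]. field_simplify; lra. }
    assert (2 / (x - a) * (f ((a + x) / 2) - f a) <= 2 * (f (x / 2) - f a)).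
    { assert (2 / (x - a) * (f ((a + x) / 2) - f a) <= 2 / (x - a) * (f (x / 2) - f a)).
      { apply Rmult_le_compat_l; lra. }
      nra. }
    lra. }
  unfold N. pose proof (V0_pos x a Ha1 Hx).
  assert (V0 x a * I1 f a x >= V0 x a * (2 * - (2 * B))) by nra.
  nra.
Qed.

Lemma dcomp (g g' : R -> R) a x m : is_derive g (arg a x m) (g' (arg a x m)) ->
  is_derive (fun m => g (arg a x m)) m ((x - a) / 2 * g' (arg a x m)).
Proof.
  intros H. apply (is_derive_comp (K:=R_AbsRing) (V:=R_NormedModule) g (fun m => arg a x m)); auto.
  unfold arg. auto_derive; auto. field.
Qed.

Lemma dmul (u v : R -> R) m du dv : is_derive u m du -> is_derive v m dv ->
  is_derive (fun y => u y * v y) m (du * v m + u m * dv).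
Proof.
  intros H1 H2. apply (is_derive_mult (K:=R_AbsRing) u v m du dv H1 H2). intros; apply Rmult_comm.
Qed.

Lemma dadd (u v : R -> R) m du dv : is_derive u m du -> is_derive v m dv ->
  is_derive (fun y => u y + v y) m (du + dv).
Proof. intros H1 H2. apply (is_derive_plus (K:=R_AbsRing) (V:=R_NormedModule) u v m du dv H1 H2). Qed.

Lemma dsub (u v : R -> R) m du dv : is_derive u m du -> is_derive v m dv ->
  is_derive (fun y => u y - v y) m (du - dv).
Proof. intros H1 H2. apply (is_derive_minus (K:=R_AbsRing) (V:=R_NormedModule) u v m du dv H1 H2). Qed.

Lemma dfix (u v : R -> R) m l1 l2 : is_derive u m l1 -> (forall y, u y = v y) -> l1 = l2 -> is_derive v m l2.
Proof. intros H E E'. subst. apply (is_derive_ext u v); auto. Qed.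

Definition Fanti f a x m :=
  (2 / (x - a) * ((1 + m) / 2) ^ 2) * D2 f (arg a x m)
  - (4 / (x - a) ^ 2 * ((1 + m) / 2)) * D1 f (arg a x m)
  + 4 / (x - a) ^ 3 * f (arg a x m).

Lemma anti f a x p q : Fprops f -> 0 < a < 1 -> 0 < x < 1 -> x <> a -> -1 <= p <= q -> q <= 1 ->
  RInt (fun m => D3 f (arg a x m) * ((1 + m) / 2 * ((1 + m) / 2))) p q = Fanti f a x q - Fanti f a x p.
Proof.
  intros HF Ha Hx Hxa Hp Hq.
  apply ftc; [lra| |].
  - intros m Hm. assert (Hin : 0 < arg a x m < 1) by (apply arg_in; auto; lra).
    unfold Fanti.
    eapply is_derive_ext; [intros; reflexivity|].
    match goal with |- is_derive _ _ ?l => set (L := l) end.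
    assert (H1 := dmul (fun m => 2 / (x - a) * ((1 + m) / 2) ^ 2) (fun m => D2 f (arg a x m)) m
         (2 / (x - a) * (2 * ((1 + m) / 2) * (1 / 2))) ((x - a) / 2 * D3 f (arg a x m))).
    assert (H2 := dmul (fun m => 4 / (x - a) ^ 2 * ((1 + m) / 2)) (fun m => D1 f (arg a x m)) m
         (4 / (x - a) ^ 2 * (1 / 2)) ((x - a) / 2 * D2 f (arg a x m))).
    assert (H3 := dmul (fun m => 4 / (x - a) ^ 3) (fun m => f (arg a x m)) m
         0 ((x - a) / 2 * D1 f (arg a x m))).
    assert (H := dadd _ _ m _ _ (dsub _ _ m _ _ (H1 ltac:(auto_derive; auto; field; lra) ltac:(apply dcomp; apply F_d2; auto))
                                     (H2 ltac:(auto_derive; auto; field; lra) ltac:(apply dcomp; apply F_d1; auto)))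
                 (H3 ltac:(auto_derive; auto) ltac:(apply dcomp; apply F_d0; auto))).
    simpl in H. unfold L. eapply dfix; [exact H| |].
    + intros; simpl; reflexivity.
    + simpl. field. lra.
  - intros m Hm. apply (continuous_mult (fun m => D3 f (arg a x m))).
    + apply continuous_comp; [apply cont_arg_mu|]. apply F_cont3; auto. apply arg_in; auto; lra.
    + apply cder. auto_derive. auto.
Qed.

Lemma bnd_term c k K y w : 0 <= c -> 0 <= k <= K -> 0 <= w <= 1 -> c * k * y * w <= c * K * Rabs y.
Proof.
  intros Hc Hk Hw. pose proof (Rle_abs y). pose proof (Rabs_pos y).
  assert (- Rabs y <= y) by (pose proof (Rle_abs (-y)); rewrite Rabs_Ropp in *; lra).
  assert (y * w <= Rabs y) by nra.
  assert (k * (y * w) <= K * Rabs y) by nra.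
  nra.
Qed.

Lemma I2_neg_small f a x d0 : Fprops f -> 0 < a < d0 -> 0 < x < d0 -> d0 <= 1/2 ->
  (forall u, 0 < u < d0 -> D3 f u < 0) -> I2 f a x < 0.
Proof.
  intros HF Ha Hx Hd0 H30. unfold I2.
  assert (E : RInt (fun _ => 0) (-1) 1 = 0) by (rewrite rint_const; lra).
  rewrite <- E. apply RInt_lt; [lra| | |].
  - intros; apply continuous_const.
  - intros m Hm. apply cont_integrand; try lra. apply F_cont3; auto. apply cont_rho2.
  - intros m Hm.
    assert (Harg : 0 < arg a x m < d0).
    { destruct (Rle_dec a x).
      - split. apply arg_in; lra. pose proof (arg_hi a x m r ltac:(lra)). lra.
      - split. apply arg_in; lra. rewrite arg_eq.
        assert (0 <= (1 + m) / 2 * (a - x)) by (apply Rmult_le_pos; lra).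
        assert (E2 : a + (1 + m) / 2 * (x - a) = a - (1 + m) / 2 * (a - x)) by ring. lra. }
    pose proof (H30 _ Harg).
    unfold rho2. assert (0 < sqrt (1 - m)) by (apply sqrt_lt_R0; lra).
    assert (0 < (1 + m) / 2 * ((1 + m) / 2 * sqrt (1 - m))).
    { apply Rmult_lt_0_compat; [lra|]. apply Rmult_lt_0_compat; lra. }
    nra.
Qed.

Lemma concave f : Fprops f ->
  exists a0, 0 < a0 < 1 /\ forall a x, 0 < a < a0 -> 0 < x < 1 -> I2 f a x < 0.
Proof.
  intros HF.
  destruct (F_30 f HF) as [d0 [Hd0 H30]].
  destruct (F_31 f HF) as [d1 [Hd1 H31]].
  remember (d0 / 2) as dl eqn:Hdl.
  destruct (continuity_ab_maj (D3 f) dl (1 - d1 / 2)) as [Mx [HMx HMxb]]; [lra| |].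
  { intros c Hc. apply continuity_pt_filterlim. apply F_cont3; auto; lra. }
  remember (Rmax 0 (D3 f Mx)) as B3 eqn:HB3.
  assert (HB30 : 0 <= B3) by (rewrite HB3; apply Rmax_l).
  assert (HB3b : forall s, dl <= s < 1 -> D3 f s <= B3).
  { intros s Hs. destruct (Rle_dec s (1 - d1 / 2)).
    - pose proof (HMx s ltac:(lra)). pose proof (Rmax_r 0 (D3 f Mx)). lra.
    - pose proof (H31 s ltac:(lra)). lra. }
  remember (2 * / dl * Rabs (D2 f dl) + 4 * (/ dl) ^ 2 * Rabs (D1 f dl) + 4 * (/ dl) ^ 3 * Rabs (f dl)) as Cd eqn:HCd.
  remember (sqrt d0) as s0 eqn:Hs0.
  assert (Hs0p : 0 < s0) by (rewrite Hs0; apply sqrt_lt_R0; lra).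
  remember (Rmax 0 ((s0 * Cd + 4 * B3) / (4 * s0))) as M eqn:HM.
  assert (HM0 : 0 <= M) by (rewrite HM; apply Rmax_l).
  assert (HM1 : (s0 * Cd + 4 * B3) / (4 * s0) <= M) by (rewrite HM; apply Rmax_r).
  destruct (F_lim0 f HF M) as [dM [HdM Hlim]].
  exists (Rmin dM (dl / 2)). split.
  { split; [apply Rmin_glb_lt; lra|]. pose proof (Rmin_l dM (dl/2)). lra. }
  intros a x Ha Hx.
  pose proof (Rmin_l dM (dl/2)). pose proof (Rmin_r dM (dl/2)).
  assert (Ha1 : 0 < a < 1) by lra.
  destruct (Rlt_le_dec x d0) as [Hxs|Hxl].
  { apply (I2_neg_small f a x d0); auto; lra. }
  assert (Hfa : M < f a) by (apply Hlim; lra).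
  remember (x - a) as h eqn:Hh.
  remember ((dl - a) / h) as wd eqn:Hwd.
  remember (2 * wd - 1) as md eqn:Hmd.
  assert (Hwdb : 0 < wd < 1).
  { rewrite Hwd. split. apply Rdiv_lt_0_compat; lra.
    apply (Rmult_lt_reg_r h); [lra|]. field_simplify; lra. }
  assert (Hargd : arg a x md = dl).
  { rewrite arg_eq, Hmd, Hwd. field_simplify; [|lra]. rewrite Hh. field. lra. }
  assert (H1md : d0 <= 1 - md).
  { assert (E : 1 - md = 2 * (x - dl) / h) by (rewrite Hmd, Hwd, Hh; field; lra).
    rewrite E. apply (Rmult_le_reg_r h); [lra|]. field_simplify; [|lra]. nra. }
  unfold I2. rewrite <- (rint_chasles _ (-1) md 1).
  2,3: apply ex_integrand; auto; try lra; [apply F_cont3; auto| intros; apply cont_rho2].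
  assert (Hhigh : RInt (fun m => D3 f (arg a x m) * rho2 m) md 1 <= (1 - md) * (2 * B3)).
  { apply rint_le_const; [lra| |].
    - apply ex_integrand; auto; try lra. apply F_cont3; auto. intros; apply cont_rho2.
    - intros m Hm. pose proof (rho2_bnd m ltac:(lra)).
      assert (dl <= arg a x m < 1).
      { split. rewrite <- Hargd. apply arg_mono; lra. apply arg_in; auto; lra. }
      pose proof (HB3b _ H2). nra. }
  set (W := fun m => D3 f (arg a x m) * ((1 + m) / 2 * ((1 + m) / 2))).
  assert (Hlow1 : RInt (fun m => D3 f (arg a x m) * rho2 m) (-1) md <=
                  RInt (fun m => sqrt (1 - md) * W m) (-1) md).
  { apply RInt_le; [lra| | |].
    - apply ex_integrand; auto; try lra. apply F_cont3; auto. intros; apply cont_rho2.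
    - apply exc. intros z Hz. rewrite Rmin_left, Rmax_right in Hz by lra. unfold W.
      apply (continuous_mult (fun _ => sqrt (1 - md))); [apply continuous_const|].
      apply (continuous_mult (fun m => D3 f (arg a x m))).
      + apply continuous_comp; [apply cont_arg_mu|]. apply F_cont3; auto. apply arg_in; auto; lra.
      + apply cder. auto_derive. auto.
    - intros m Hm. unfold W, rho2.
      assert (0 < arg a x m < dl).
      { split. apply arg_in; auto; lra. rewrite <- Hargd. apply arg_smono; lra. }
      assert (D3 f (arg a x m) < 0) by (apply H30; lra).
      assert (sqrt (1 - md) <= sqrt (1 - m)) by (apply sqrt_le_1_alt; lra).
      assert (0 <= (1 + m) / 2 * ((1 + m) / 2)) by (apply Rmult_le_pos; lra).
      assert (D3 f (arg a x m) * ((1 + m) / 2 * ((1 + m) / 2)) <= 0) by nra.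
      nra. }
  rewrite (rint_scal W) in Hlow1.
  2:{ apply exc. intros z Hz. rewrite Rmin_left, Rmax_right in Hz by lra. unfold W.
      apply (continuous_mult (fun m => D3 f (arg a x m))).
      + apply continuous_comp; [apply cont_arg_mu|]. apply F_cont3; auto. apply arg_in; auto; lra.
      + apply cder. auto_derive. auto. }
  unfold W in Hlow1. rewrite (anti f a x (-1) md) in Hlow1; auto; try lra.
  assert (HF1 : Fanti f a x (-1) = 4 / h ^ 3 * f a).
  { unfold Fanti. rewrite arg_m1. rewrite Hh. field. lra. }
  assert (HFd : Fanti f a x md = 2 * / h * D2 f dl * (wd ^ 2) + 4 * (/ h) ^ 2 * (- D1 f dl) * wd + 4 * (/ h) ^ 3 * f dl * 1).
  { unfold Fanti. rewrite Hargd. rewrite <- Hh.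
    replace ((1 + md) / 2) with wd by (rewrite Hmd; field). field. lra. }
  assert (Hih : 1 <= / h <= / dl).
  { split.
    - rewrite <- Rinv_1. apply Rinv_le_contravar; lra.
    - apply Rinv_le_contravar; lra. }
  assert (T1 : 2 * / h * D2 f dl * (wd ^ 2) <= 2 * / dl * Rabs (D2 f dl)).
  { apply bnd_term; try lra. split; [apply pow2_ge_0|]. nra. }
  assert (T2 : 4 * (/ h) ^ 2 * (- D1 f dl) * wd <= 4 * (/ dl) ^ 2 * Rabs (D1 f dl)).
  { rewrite <- (Rabs_Ropp (D1 f dl)). apply bnd_term; try lra. split; [apply pow2_ge_0|].
    apply pow_incr. lra. }
  assert (T3 : 4 * (/ h) ^ 3 * f dl * 1 <= 4 * (/ dl) ^ 3 * Rabs (f dl)).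
  { apply bnd_term; try lra. split. apply pow_le; lra. apply pow_incr. lra. }
  assert (T4 : 4 / h ^ 3 * f a >= 4 * f a).
  { assert (1 <= (/ h) ^ 3) by (replace 1 with (1 ^ 3) by ring; apply pow_incr; lra).
    replace (4 / h ^ 3) with (4 * (/ h) ^ 3) by (field; lra). nra. }
  assert (Hdiff : Fanti f a x md - Fanti f a x (-1) <= Cd - 4 * f a) by lra.
  assert (Hneg : Cd - 4 * f a < 0).
  { assert (Cd / 4 <= (s0 * Cd + 4 * B3) / (4 * s0)).
    { apply (Rmult_le_reg_r (4 * s0)); [lra|]. field_simplify; lra. }
    lra. }
  assert (Hsq : s0 <= sqrt (1 - md)) by (rewrite Hs0; apply sqrt_le_1_alt; lra).
  assert (Hlow : RInt (fun m => D3 f (arg a x m) * rho2 m) (-1) md <= s0 * (Cd - 4 * f a)).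
  { assert (sqrt (1 - md) * (Fanti f a x md - Fanti f a x (-1)) <= sqrt (1 - md) * (Cd - 4 * f a)).
    { apply Rmult_le_compat_l; [apply sqrt_pos|lra]. }
    nra. }
  assert (Hfin : s0 * Cd + 4 * B3 < 4 * s0 * f a).
  { assert (Hq : (s0 * Cd + 4 * B3) / (4 * s0) < f a) by lra.
    apply (Rmult_lt_compat_r (4 * s0)) in Hq; [|lra].
    replace ((s0 * Cd + 4 * B3) / (4 * s0) * (4 * s0)) with (s0 * Cd + 4 * B3) in Hq by (field; lra).
    lra. }
  nra.
Qed.

Lemma d_ratio f a x : Fprops f -> 0 < a < 1 -> 0 < x < 1 ->
  is_derive (fun y => I0 f a y / V0 y a) x (N f a x / V0 x a ^ 2).
Proof.
  intros HF Ha Hx. pose proof (V0_pos x a Ha Hx).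
  eapply dfix; [apply (is_derive_div (I0 f a) (fun y => V0 y a) x (I1 f a x) (4/15))| | ].
  - apply dI0; auto.
  - unfold V0. auto_derive; auto; ring.
  - lra.
  - intros; reflexivity.
  - unfold N. f_equal. rewrite (Rmult_comm (I1 f a x)), (Rmult_comm (I0 f a x)). reflexivity.
Qed.

Lemma negN f a : Fprops f -> 0 < a < 1 -> exists x, 0 < x < 1 /\ N f a x < 0.
Proof.
  intros HF Ha. apply NNPP. intro Hno.
  assert (Hge : forall x, 0 < x < 1 -> 0 <= N f a x).
  { intros x Hx. apply Rnot_lt_le. intro. apply Hno. exists x; auto. }
  clear Hno.
  destruct (F_t1 f HF) as [t1 [Ht1 Hneg2]].
  remember ((1 + t1) / 2) as w1 eqn:Hw1.
  remember (Rmax w1 ((1 + a) / 2)) as x0 eqn:Hx0.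
  assert (Hx0b : w1 <= x0 /\ (1 + a) / 2 <= x0 /\ x0 < 1).
  { rewrite Hx0. split; [apply Rmax_l|]. split; [apply Rmax_r|]. apply Rmax_lub_lt; lra. }
  remember (I0 f a x0 / V0 x0 a) as r0 eqn:Hr0.
  assert (Hratio : forall x, x0 <= x < 1 -> r0 <= I0 f a x / V0 x a).
  { intros x Hx. rewrite Hr0.
    apply (incr_le (fun y => I0 f a y / V0 y a) (fun y => N f a y / V0 y a ^ 2)); [lra| |].
    - intros y Hy. apply d_ratio; auto; lra.
    - intros y Hy. pose proof (V0_pos y a Ha ltac:(lra)).
      apply Rdiv_le_0_compat; [apply Hge; lra|]. nra. }
  assert (HI1 : forall x, x0 <= x < 1 -> 4 / 15 * r0 <= I1 f a x).
  { intros x Hx. pose proof (V0_pos x a Ha ltac:(lra)).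
    pose proof (Hratio x Hx). pose proof (Hge x ltac:(lra)). unfold N in *.
    assert (r0 * V0 x a <= I0 f a x).
    { apply (Rmult_le_compat_r (V0 x a)) in H0; [|lra].
      replace (I0 f a x / V0 x a * V0 x a) with (I0 f a x) in H0 by (field; lra). lra. }
    assert (4 / 15 * r0 * V0 x a <= I1 f a x * V0 x a) by nra.
    apply (Rmult_le_reg_r (V0 x a)); lra. }
  destruct (continuity_ab_maj (D2 f) a (Rmax a t1)) as [Mx [HMx HMxb]]; [apply Rmax_l| |].
  { intros c Hc. pose proof (Rmax_lub_lt a t1 1). apply continuity_pt_filterlim. apply F_cont2; auto; lra. }
  remember (Rmax 0 (D2 f Mx)) as Bup eqn:HBup.
  assert (HBup0 : 0 <= Bup) by (rewrite HBup; apply Rmax_l).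
  assert (HBupb : forall s, a <= s < 1 -> D2 f s <= Bup).
  { intros s Hs. destruct (Rle_dec t1 s).
    - pose proof (Hneg2 s ltac:(lra)). lra.
    - pose proof (HMx s ltac:(split; [lra|]; eapply Rle_trans; [|apply Rmax_r]; lra)).
      pose proof (Rmax_r 0 (D2 f Mx)). lra. }
  remember ((1 - w1) * a + w1) as tb eqn:Htb.
  assert (Htb1 : t1 <= tb < 1) by (rewrite Htb; split; nra).
  destruct (continuity_ab_min (D1 f) t1 tb) as [mn [Hmn Hmnb]]; [lra| |].
  { intros c Hc. apply continuity_pt_filterlim. apply F_cont1; auto; lra. }
  remember (- D1 f mn) as K eqn:HK.
  assert (HK0 : 0 <= K) by (rewrite HK; pose proof (F_neg f HF mn ltac:(lra)); lra).
  assert (HKb : forall s, t1 <= s <= tb -> - K <= D1 f s).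
  { intros s Hs. pose proof (Hmn s Hs). lra. }
  remember (Rmax 0 (4 * Bup - 4 / 15 * r0)) as C2 eqn:HC2.
  assert (HC20 : 0 <= C2) by (rewrite HC2; apply Rmax_l).
  assert (HC2b : 4 * Bup - 4 / 15 * r0 <= C2) by (rewrite HC2; apply Rmax_r).
  remember (C2 / (2 * w1)) as C3 eqn:HC3.
  assert (HC30 : 0 <= C3) by (rewrite HC3; apply Rdiv_le_0_compat; lra).
  remember (Rmax (2 * x0 - 1) ((a * (1 - w1) + w1 / 2) / (1 - w1 / 2))) as ulow eqn:Hulow.
  assert (Hulowb : 2 * x0 - 1 <= ulow /\ (a * (1 - w1) + w1 / 2) / (1 - w1 / 2) <= ulow /\ ulow < 1).
  { rewrite Hulow. split; [apply Rmax_l|]. split; [apply Rmax_r|]. apply Rmax_lub_lt; [lra|].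
    apply (Rmult_lt_reg_r (1 - w1 / 2)); [lra|]. field_simplify; [|lra]. nra. }
  assert (Hf1 : forall u, ulow < u < 1 -> - K - C3 / sqrt (1 - u) <= D1 f u).
  { intros u Hu.
    remember ((1 + u) / 2) as x eqn:Hxe.
    assert (Hxb : x0 <= x < 1 /\ a < x /\ u < x) by lra.
    remember ((u - a) / (x - a)) as wu eqn:Hwu.
    remember (2 * wu - 1) as mu eqn:Hmu.
    remember (2 * w1 - 1) as m1 eqn:Hm1.
    assert (Hwub : w1 < wu < 1).
    { rewrite Hwu. split.
      - apply (Rmult_lt_reg_r (x - a)); [lra|].
        replace ((u - a) / (x - a) * (x - a)) with (u - a) by (field; lra).
        assert (Hq : (a * (1 - w1) + w1 / 2) / (1 - w1 / 2) < u) by lra.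
        apply (Rmult_lt_compat_r (1 - w1 / 2)) in Hq; [|lra].
        replace ((a * (1 - w1) + w1 / 2) / (1 - w1 / 2) * (1 - w1 / 2)) with (a * (1 - w1) + w1 / 2) in Hq by (field; lra).
        rewrite Hxe. nra.
      - apply (Rmult_lt_reg_r (x - a)); [lra|].
        replace ((u - a) / (x - a) * (x - a)) with (u - a) by (field; lra). lra. }
    assert (Hargu : arg a x mu = u).
    { rewrite arg_eq, Hmu, Hwu. field. lra. }
    assert (Harg1 : t1 <= arg a x m1 <= tb).
    { rewrite arg_eq, Hm1. replace ((1 + (2 * w1 - 1)) / 2) with w1 by field. split.
      - assert (w1 * x0 <= w1 * x) by (apply Rmult_le_compat_l; lra).
        assert (t1 <= w1 * w1) by (rewrite Hw1; nra). nra.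
      - rewrite Htb. nra. }
    assert (Hm1b : -1 < m1 < mu /\ mu < 1) by lra.
    assert (Hx01 : 0 < x < 1) by lra.
    assert (HexI : forall p q, -1 <= p <= q -> q <= 1 -> ex_RInt (fun m => D2 f (arg a x m) * rho1 m) p q).
    { intros p q Hp Hq. apply ex_integrand; auto; try lra. apply F_cont2; auto. intros; apply cont_rho1. }
    pose proof (HI1 x ltac:(lra)) as HI1x. unfold I1 in HI1x.
    rewrite <- (rint_chasles _ (-1) m1 1) in HI1x by (apply HexI; lra).
    rewrite <- (rint_chasles _ m1 mu 1) in HI1x by (apply HexI; lra).
    assert (HP1 : RInt (fun m => D2 f (arg a x m) * rho1 m) (-1) m1 <= (m1 - -1) * (2 * Bup)).
    { apply rint_le_const; [lra|apply HexI; lra|].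
      intros m Hm. pose proof (rho1_bnd m ltac:(lra)).
      assert (Hs : a <= arg a x m < 1) by (split; [apply arg_lo; lra|apply arg_in; auto; lra]).
      pose proof (HBupb _ Hs). nra. }
    assert (HP3 : RInt (fun m => D2 f (arg a x m) * rho1 m) mu 1 <= (1 - mu) * 0).
    { apply rint_le_const; [lra|apply HexI; lra|].
      intros m Hm. pose proof (rho1_bnd m ltac:(lra)).
      assert (Hs : t1 <= arg a x m < 1).
      { split. apply (Rle_trans _ (arg a x m1)); [lra|]. apply arg_mono; lra. apply arg_in; auto; lra. }
      pose proof (Hneg2 _ Hs). nra. }
    assert (HP2 : RInt (fun m => D2 f (arg a x m) * rho1 m) m1 mu <=
                  RInt (fun m => (w1 * sqrt (1 - mu)) * D2 f (arg a x m)) m1 mu).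
    { apply RInt_le; [lra|apply HexI; lra| |].
      - apply exc. intros z Hz. rewrite Rmin_left, Rmax_right in Hz by lra.
        apply (continuous_mult (fun _ => w1 * sqrt (1 - mu))); [apply continuous_const|].
        apply continuous_comp; [apply cont_arg_mu|]. apply F_cont2; auto. apply arg_in; auto; lra.
      - intros m Hm.
        assert (Hs : t1 <= arg a x m < 1).
        { split. apply (Rle_trans _ (arg a x m1)); [lra|]. apply arg_mono; lra. apply arg_in; auto; lra. }
        pose proof (Hneg2 _ Hs).
        assert (sqrt (1 - mu) <= sqrt (1 - m)) by (apply sqrt_le_1_alt; lra).
        pose proof (sqrt_pos (1 - mu)).
        assert (w1 * sqrt (1 - mu) <= rho1 m).
        { unfold rho1. apply Rmult_le_compat; lra. }
        nra. }
    rewrite rint_scal in HP2.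
    2:{ apply ex_plain; auto; try lra. apply F_cont2; auto. }
    rewrite (ftc_arg (D1 f) (D2 f) a x m1 mu) in HP2; auto; try lra.
    2: apply F_d1; auto.
    2: apply F_cont2; auto.
    rewrite Hargu in HP2.
    remember (D1 f u - D1 f (arg a x m1)) as D eqn:HD.
    idtac.
    assert (HP1' : (m1 - -1) * (2 * Bup) <= 4 * Bup) by nra.
    pose proof (HKb _ Harg1) as HK1.
    assert (Hsu : 0 < sqrt (1 - u)) by (apply sqrt_lt_R0; lra).
    assert (HC3s : 0 <= C3 / sqrt (1 - u)) by (apply Rdiv_le_0_compat; lra).
    destruct (Rle_dec 0 D).
    { lra. }
    assert (Hmain : w1 * sqrt (1 - mu) * (2 / (x - a) * D) >= - C2) by lra.
    assert (Hsmu : sqrt (1 - u) <= sqrt (1 - mu)).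
    { apply sqrt_le_1_alt. rewrite Hmu, Hwu. apply (Rmult_le_reg_r (x - a)); [lra|].
      field_simplify; [|lra]. rewrite Hxe. nra. }
    assert (Hk2 : 2 <= 2 / (x - a)).
    { apply (Rmult_le_reg_r (x - a)); [lra|]. field_simplify; lra. }
    assert (Hq : w1 * sqrt (1 - u) * 2 * D >= - C2).
    { assert (0 <= w1 * sqrt (1 - u) * 2 <= w1 * sqrt (1 - mu) * (2 / (x - a))).
      { split. nra. apply Rmult_le_compat; nra. }
      nra. }
    assert (HD' : - (C3 / sqrt (1 - u)) <= D).
    { rewrite HC3. apply (Rmult_le_reg_r (2 * w1 * sqrt (1 - u))); [nra|].
      replace (- (C2 / (2 * w1) / sqrt (1 - u)) * (2 * w1 * sqrt (1 - u))) with (- C2) by (field; lra).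
      nra. }
    lra. }
  remember ((ulow + 1) / 2) as s0 eqn:Hs0.
  set (hh := fun u => f u + K * u - 2 * C3 * sqrt (1 - u)).
  assert (Hh : forall u, s0 <= u < 1 -> hh s0 <= hh u).
  { intros u Hu.
    apply (incr_le hh (fun u => D1 f u + K + C3 / sqrt (1 - u))); [lra| |].
    - intros y Hy. unfold hh.
      apply (dfix (fun u => (f u + K * u) - 2 * C3 * sqrt (1 - u)) _ y
                  (D1 f y + K * 1 - 2 * C3 * (-1 / (2 * sqrt (1 - y))))).
      + apply dsub. apply dadd. apply F_d0; auto; lra.
        auto_derive; auto; ring.
        auto_derive; [lra|]. unfold Rminus, Rdiv. ring.
      + intros; reflexivity.
      + assert (0 < sqrt (1 - y)) by (apply sqrt_lt_R0; lra). match goal with |- ?A = ?B => change (@eq R A B) end. field. lra.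
    - intros y Hy. pose proof (Hf1 y ltac:(lra)). lra. }
  destruct (F_lim1 f HF (hh s0 - K)) as [d [Hd Hlim]].
  remember (Rmax d ((s0 + 1) / 2)) as u eqn:Hue.
  assert (Hub : d <= u /\ s0 < u < 1).
  { rewrite Hue. split; [apply Rmax_l|]. split. eapply Rlt_le_trans; [|apply Rmax_r]; lra.
    apply Rmax_lub_lt; lra. }
  pose proof (Hlim u ltac:(lra)) as Hl1.
  pose proof (Hh u ltac:(lra)) as Hl2. unfold hh in Hl2 at 2.
  pose proof (sqrt_pos (1 - u)).
  assert (K * u <= K) by nra.
  nra.
Qed.

Lemma N_cont f a x : Fprops f -> 0 < a < 1 -> 0 < x < 1 -> continuity_pt (N f a) x.
Proof.
  intros. apply continuity_pt_filterlim. apply cder. eexists. apply dN; auto.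
Qed.

Lemma N_decr f a p q : Fprops f -> 0 < a < 1 -> (forall x, 0 < x < 1 -> I2 f a x < 0) ->
  0 < p < q -> q < 1 -> N f a q < N f a p.
Proof.
  intros HF Ha Hc Hp Hq.
  apply (decr_strict (N f a) (fun x => V0 x a * I2 f a x)); [lra| |].
  - intros; apply dN; auto; lra.
  - intros x Hx. pose proof (V0_pos x a Ha ltac:(lra)). pose proof (Hc x ltac:(lra)). nra.
Qed.

Lemma J_strict f a z y : Fprops f -> 0 < a < 1 -> (forall x, 0 < x < 1 -> I2 f a x < 0) ->
  0 < z < 1 -> N f a z = 0 -> 0 < y < 1 -> y <> z -> J0 f z a < J0 f y a.
Proof.
  intros HF Ha Hc Hz HNz Hy Hyz.
  pose proof sqrt2_pos as Hs2.
  assert (Hc4 : 0 < / (4 * sqrt 2)) by (apply Rinv_0_lt_compat; lra).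
  assert (HD : forall x, 0 < x < 1 -> is_derive (fun xi => J0 f xi a) x (- / (4 * sqrt 2) * N f a x / (V0 x a) ^ 2)).
  { intros; apply dJ; auto. }
  assert (Hsign : forall x, 0 < x < 1 -> 0 < - / (4 * sqrt 2) * N f a x / (V0 x a) ^ 2 <-> N f a x < 0).
  { intros x Hx. pose proof (V0_pos x a Ha Hx). assert (0 < V0 x a ^ 2) by nra.
    split; intro H1.
    - apply Rnot_le_lt. intro. assert (- / (4 * sqrt 2) * N f a x <= 0) by nra.
      assert (- / (4 * sqrt 2) * N f a x / V0 x a ^ 2 <= 0).
      { unfold Rdiv. apply Rmult_le_0_r; [lra|]. left; apply Rinv_0_lt_compat; lra. }
      lra.
    - unfold Rdiv. apply Rmult_lt_0_compat; [nra|]. apply Rinv_0_lt_compat; lra. }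
  assert (Hsign' : forall x, 0 < x < 1 -> - / (4 * sqrt 2) * N f a x / (V0 x a) ^ 2 < 0 <-> 0 < N f a x).
  { intros x Hx. pose proof (V0_pos x a Ha Hx). assert (0 < V0 x a ^ 2) by nra.
    split; intro H1.
    - apply Rnot_le_lt. intro. assert (0 <= - / (4 * sqrt 2) * N f a x) by nra.
      assert (0 <= - / (4 * sqrt 2) * N f a x / V0 x a ^ 2).
      { unfold Rdiv. apply Rmult_le_pos; [lra|]. left; apply Rinv_0_lt_compat; lra. }
      lra.
    - unfold Rdiv. assert (- / (4 * sqrt 2) * N f a x < 0) by nra.
      assert (0 < / V0 x a ^ 2) by (apply Rinv_0_lt_compat; lra). nra. }
  destruct (Rlt_dec y z) as [Hlt|Hge].
  - remember ((y + z) / 2) as m eqn:Hm.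
    assert (J0 f m a < J0 f y a).
    { apply (decr_strict (fun xi => J0 f xi a) (fun x => - / (4 * sqrt 2) * N f a x / (V0 x a) ^ 2)); [lra| |].
      - intros; apply HD; lra.
      - intros x Hx. apply Hsign'; [lra|]. rewrite <- HNz. apply (N_decr f a); auto; lra. }
    assert (J0 f z a <= J0 f m a).
    { apply (decr_le (fun xi => J0 f xi a) (fun x => - / (4 * sqrt 2) * N f a x / (V0 x a) ^ 2)); [lra| |].
      - intros; apply HD; lra.
      - intros x Hx. destruct (Req_dec x z) as [->|].
        + rewrite HNz. unfold Rdiv. rewrite Rmult_0_r, Rmult_0_l. lra.
        + left. apply Hsign'; [lra|]. rewrite <- HNz. apply (N_decr f a); auto; lra. }
    lra.
  - assert (Hlt : z < y) by lra.
    remember ((y + z) / 2) as m eqn:Hm.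
    assert (J0 f m a < J0 f y a).
    { apply (incr_strict (fun xi => J0 f xi a) (fun x => - / (4 * sqrt 2) * N f a x / (V0 x a) ^ 2)); [lra| |].
      - intros; apply HD; lra.
      - intros x Hx. apply Hsign; [lra|]. rewrite <- HNz. apply (N_decr f a); auto; lra. }
    assert (J0 f z a <= J0 f m a).
    { apply (incr_le (fun xi => J0 f xi a) (fun x => - / (4 * sqrt 2) * N f a x / (V0 x a) ^ 2)); [lra| |].
      - intros; apply HD; lra.
      - intros x Hx. destruct (Req_dec x z) as [->|].
        + rewrite HNz. unfold Rdiv. rewrite Rmult_0_r, Rmult_0_l. lra.
        + left. apply Hsign; [lra|]. rewrite <- HNz. apply (N_decr f a); auto; lra. }
    lra.
Qed.

Lemma mkF (u0 f : R -> R)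
  (Hu0_range : forall x : R, 0 < u0 x < 1)
  (Hf_inv : forall x : R, f (u0 x) = x)
  (Hf_smooth : forall (n : nat) (u : R), 0 < u < 1 -> ex_derive_n f n u)
  (Hf_neg : forall u : R, 0 < u < 1 -> Derive f u < 0)
  (Hf3_0 : exists d : R, 0 < d /\ forall u : R, 0 < u < d -> Derive_n f 3 u < 0)
  (Hf3_1 : exists d : R, 0 < d /\ forall u : R, 1 - d < u < 1 -> Derive_n f 3 u < 0) :
  Fprops f.
Proof.
  assert (H0 : forall t, 0 < t < 1 -> is_derive f t (D1 f t)).
  { intros t Ht. pose proof (Hf_smooth 1%nat t Ht) as H. simpl in H.
    apply Derive_correct. exact H. }
  assert (H1 : forall t, 0 < t < 1 -> is_derive (D1 f) t (D2 f t)).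
  { intros t Ht. pose proof (Hf_smooth 2%nat t Ht) as H.
    change (ex_derive (D1 f) t) in H. apply Derive_correct. exact H. }
  assert (H2 : forall t, 0 < t < 1 -> is_derive (D2 f) t (D3 f t)).
  { intros t Ht. pose proof (Hf_smooth 3%nat t Ht) as H.
    change (ex_derive (D2 f) t) in H. apply Derive_correct. exact H. }
  assert (H3 : forall t, 0 < t < 1 -> continuous (D3 f) t).
  { intros t Ht. pose proof (Hf_smooth 4%nat t Ht) as H.
    change (ex_derive (D3 f) t) in H. apply cder. exact H. }
  assert (Hdec : forall s t, 0 < s < t -> t < 1 -> f t < f s).
  { intros s t Hs Ht. apply (decr_strict f (D1 f)); [lra| |].
    - intros; apply H0; lra.
    - intros; apply Hf_neg; lra. }
  split; [exact H0|]. split; [exact H1|]. split; [exact H2|]. split; [exact H3|].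
  split; [exact Hf_neg|].
  split.
  { intros M. exists (u0 (M + 1)). split; [apply Hu0_range|].
    intros a Ha. pose proof (Hu0_range (M + 1)). destruct (Req_dec a (u0 (M + 1))) as [->|].
    - rewrite Hf_inv. lra.
    - pose proof (Hdec a (u0 (M + 1)) ltac:(lra) ltac:(lra)). rewrite Hf_inv in H5. lra. }
  split.
  { intros M. exists (u0 (M - 1)). split; [apply Hu0_range|].
    intros a Ha. pose proof (Hu0_range (M - 1)). destruct (Req_dec a (u0 (M - 1))) as [->|].
    - rewrite Hf_inv. lra.
    - pose proof (Hdec (u0 (M - 1)) a ltac:(lra) ltac:(lra)). rewrite Hf_inv in H5. lra. }
  split.
  { destruct Hf3_0 as [d [Hd Hd']]. exists (Rmin d (1/2)). split.
    - split; [apply Rmin_glb_lt; lra|apply Rmin_r].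
    - intros u Hu. pose proof (Rmin_l d (1/2)). apply (Hd' u). lra. }
  { destruct Hf3_1 as [d [Hd Hd']]. exists (Rmin d (1/2)). split.
    - split; [apply Rmin_glb_lt; lra|apply Rmin_r].
    - intros u Hu. pose proof (Rmin_l d (1/2)). apply (Hd' u). lra. }
Qed.

Theorem lemma4p7 (u0 f : R -> R)
  (* standing assumptions on u0 *)
  (Hu0_smooth : forall (n : nat) (x : R), ex_derive_n u0 n x)
  (Hu0_decr : forall x y : R, x < y -> u0 y < u0 x)
  (Hu0_range : forall x : R, 0 < u0 x < 1)
  (Hu0_minf : is_lim u0 m_infty 1)
  (Hu0_pinf : is_lim u0 p_infty 0)
  (* f is the inverse of u0 *)
  (Hf_inv : forall x : R, f (u0 x) = x)
  (* f smooth on (0,1) with f' < 0 *)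
  (Hf_smooth : forall (n : nat) (u : R), 0 < u < 1 -> ex_derive_n f n u)
  (Hf_neg : forall u : R, 0 < u < 1 -> Derive f u < 0)
  (* f''' < 0 near 0 and near 1 *)
  (Hf3_0 : exists d : R, 0 < d /\ forall u : R, 0 < u < d -> Derive_n f 3 u < 0)
  (Hf3_1 : exists d : R, 0 < d /\ forall u : R, 1 - d < u < 1 -> Derive_n f 3 u < 0) :
  exists (eps : R) (xc : R -> R),
    0 < eps <= 1 /\
    (forall u3 : R, 0 < u3 < eps ->
       (* xc u3 is a critical point in (0,1) *)
       (0 < xc u3 < 1 /\ is_derive (fun xi => J0 f xi u3) (xc u3) 0) /\
       (* it is the only critical point in (0,1) *)
       (forall y : R, 0 < y < 1 -> is_derive (fun xi => J0 f xi u3) y 0 -> y = xc u3) /\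
       (* it is a minimizing point over (0,1) *)
       (forall y : R, 0 < y < 1 -> J0 f (xc u3) u3 <= J0 f y u3) /\
       (* and the only minimizing point *)
       (forall y : R, 0 < y < 1 ->
          (forall z : R, 0 < z < 1 -> J0 f y u3 <= J0 f z u3) -> y = xc u3)) /\
    (* the critical point tends to 1 as u3 -> 0+ *)
    filterlim xc (at_right 0) (locally 1).
Proof.
  pose proof (mkF u0 f Hu0_range Hf_inv Hf_smooth Hf_neg Hf3_0 Hf3_1) as HF.
  destruct (concave f HF) as [a0 [Ha0 Hconc]].
  destruct (posN f (1/2) HF ltac:(lra)) as [a1 [Ha1 Hpos]].
  remember (Rmin a0 a1) as eps eqn:Heps.
  assert (Heps0 : 0 < eps < 1 /\ eps <= a0 /\ eps <= a1).
  { rewrite Heps. split; [split; [apply Rmin_glb_lt; lra|]|split; [apply Rmin_l|apply Rmin_r]].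
    pose proof (Rmin_l a0 a1). lra. }
  assert (Hex : forall a, exists z, 0 < a < eps -> 0 < z < 1 /\ N f a z = 0).
  { intros a. destruct (Rlt_dec 0 a) as [Ha|Ha]; [destruct (Rlt_dec a eps) as [Ha'|Ha']|].
    2,3: exists 0; intros; lra.
    assert (Ha1' : 0 < a < 1) by lra.
    destruct (negN f a HF Ha1') as [xb [Hxb HNxb]].
    pose proof (Hpos a ltac:(lra)) as HN12.
    assert (Hxb2 : 1/2 < xb).
    { apply Rnot_le_lt. intro Hle. destruct (Req_dec xb (1/2)) as [->|]; [lra|].
      pose proof (N_decr f a xb (1/2) HF Ha1' (fun x Hx => Hconc a x ltac:(lra) Hx) ltac:(lra) ltac:(lra)). lra. }
    destruct (IVT_interv (fun y => - N f a y) (1/2) xb) as [z [Hz HNz]].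
    - intros y Hy. apply continuity_pt_opp. apply N_cont; auto; lra.
    - lra.
    - lra.
    - lra.
    - exists z. intros _. split; [lra|]. lra. }
  exists eps, (fun a => proj1_sig (constructive_indefinite_description _ (Hex a))).
  split; [lra|].
  split.
  - intros u3 Hu3.
    cbv beta. destruct (constructive_indefinite_description _ (Hex u3)) as [z Hz]. cbn [proj1_sig].
    specialize (Hz Hu3). destruct Hz as [Hz HNz].
    assert (Ha : 0 < u3 < 1) by lra.
    assert (Hc : forall x, 0 < x < 1 -> I2 f u3 x < 0) by (intros; apply Hconc; auto; lra).
    split; [|split; [|split]].
    + split; [exact Hz|].
      apply (dfix (fun xi => J0 f xi u3) _ z _ 0 (dJ f u3 z HF Ha Hz)); [intros; reflexivity|].
      rewrite HNz. match goal with |- ?A = ?B => change (@eq R A B) end. unfold Rdiv. ring.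
    + intros y Hy Hd.
      pose proof (is_derive_unique _ _ _ Hd) as E1.
      pose proof (is_derive_unique _ _ _ (dJ f u3 y HF Ha Hy)) as E2.
      rewrite E1 in E2.
      assert (HNy : N f u3 y = 0).
      { pose proof (V0_pos y u3 Ha Hy). pose proof sqrt2_pos.
        assert (0 < V0 y u3 ^ 2) by nra.
        assert (Hq : - / (4 * sqrt 2) * N f u3 y = 0).
        { apply (Rmult_eq_reg_r (/ V0 y u3 ^ 2)). rewrite Rmult_0_l. symmetry. exact E2.
          apply Rgt_not_eq. apply Rinv_0_lt_compat. lra. }
        assert (Hc4 : / (4 * sqrt 2) <> 0) by (apply Rinv_neq_0_compat; lra).
        apply Rmult_integral in Hq. destruct Hq as [Hq|Hq]; [|auto]. exfalso. apply Hc4. lra. }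
      destruct (Rtotal_order y z) as [Hlt|[Heq|Hgt]]; auto.
      * pose proof (N_decr f u3 y z HF Ha Hc ltac:(lra) ltac:(lra)). lra.
      * pose proof (N_decr f u3 z y HF Ha Hc ltac:(lra) ltac:(lra)). lra.
    + intros y Hy. destruct (Req_dec y z) as [->|Hne]; [lra|].
      left. apply (J_strict f u3 z y); auto.
    + intros y Hy Hmin. apply NNPP. intro Hne.
      pose proof (J_strict f u3 z y HF Ha Hc Hz HNz Hy (fun E => Hne E)).
      pose proof (Hmin z Hz). lra.
  - intros P [e He].
    remember (Rmax (1/2) (1 - e / 2)) as xs eqn:Hxs.
    assert (Hxsb : 1/2 <= xs /\ 1 - e / 2 <= xs /\ xs < 1).
    { rewrite Hxs. split; [apply Rmax_l|]. split; [apply Rmax_r|].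
      apply Rmax_lub_lt; [lra|]. destruct e; simpl; lra. }
    destruct (posN f xs HF ltac:(lra)) as [a2 [Ha2 Hpos2]].
    assert (Hd : 0 < Rmin eps a2) by (apply Rmin_glb_lt; lra).
    exists (mkposreal _ Hd). intros a Hball Ha.
    simpl in Hball. unfold ball in Hball; simpl in Hball.
    unfold AbsRing_ball, abs, minus, plus, opp in Hball; simpl in Hball.
    rewrite Rabs_right in Hball by lra.
    pose proof (Rmin_l eps a2). pose proof (Rmin_r eps a2).
    cbv beta. destruct (constructive_indefinite_description _ (Hex a)) as [z Hz]. cbn [proj1_sig].
    specialize (Hz ltac:(lra)). destruct Hz as [Hz HNz].
    assert (Ha' : 0 < a < 1) by lra.
    assert (Hc : forall x, 0 < x < 1 -> I2 f a x < 0) by (intros; apply Hconc; auto; lra).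
    assert (xs < z).
    { apply Rnot_le_lt. intro Hle. destruct (Req_dec z xs) as [->|].
      - pose proof (Hpos2 a ltac:(lra)). lra.
      - pose proof (N_decr f a z xs HF Ha' Hc ltac:(lra) ltac:(lra)). pose proof (Hpos2 a ltac:(lra)). lra. }
    apply He. unfold ball; simpl. unfold AbsRing_ball, abs, minus, plus, opp; simpl.
    rewrite Rabs_left1 by lra. destruct e; simpl in *; lra.
Qed.
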